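(* Let $C$ be a nonzero $A$-code of length $l$, let $G$ be a matrix whose rows form a basis of divisors of $C$, and let $H$ be the output of the algorithm gen-mat-dual on input $G$. Let $\tilde H$ be the matrix obtained from $H$ by deleting its zero rows, say with $r$ rows, and let $H^R$ be the $r\times l$ matrix with entries $h^R_{ij}=\tilde h_{r-i+1,\,l-j+1}$. Then $H^R$ is the canonical generator matrix of the reciprocal dual $C^{\perp R}=\{(c_l,\ldots,c_1):(c_1,\ldots,c_l)\in C^\perp\}$.
   Context: Let $\mathbb{F}$ be a finite field, $f(x)\in\mathbb{F}[x]$ monic of degree $m$, $A=\mathbb{F}[x]/\langle f(x)\rangle$, elements identified with polynomials of degree $<m$. An $A$-code of length $l$ is an $A$-submodule of $A^l$; $C^\perp=\{a\in A^l:\sum_ia_ic_i=0\ \forall c\in C\}$. For $u\in A^l$, $L_{\mathrm{ind}}(u)$ is the smallest index of a nonzero entry and $L_{\mathrm{coef}}(u)$ that entry. For nonzero $C$, $L_{\mathrm{ind}}(C)=\min_{u\in C}L_{\mathrm{ind}}(u)$; $L_{\mathrm{coef}}(C)$ is the monic polynomial $g$ of minimal degree such that some $c\in C$ has $L_{\mathrm{ind}}(c)=L_{\mathrm{ind}}(C)$ and $L_{\mathrm{coef}}(c)=g$; such $c$ is a leading element. $C^{(1)}=C$, $C^{(n+1)}=\{c\in C^{(n)}:L_{\mathrm{ind}}(c)>L_{\mathrm{ind}}(C^{(n)})\}$ while $C^{(n)}\neq0$; with $k$ largest such that $C^{(k)}\ne0$, a tuple $(g^{(1)},\dots,g^{(k)})$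 with $g^{(j)}$ a leading element of $C^{(j)}$ is a basis of divisors (leading coefficients are then monic divisors of $f$). The canonical generator matrix (CGM) of a nonzero $A$-code is the unique matrix whose rows $g^{(1)},\dots,g^{(k)}$ form a basis of divisors and satisfy $\deg g_{t,j_i}<\deg g_{i,j_i}$ for all $t<i$, where $g_{i,j_i}$ is the leading coefficient of row $i$. Algorithm gen-mat-dual, on input a $k\times l$ matrix $G=(g_{ij})$ whose rows form a basis of divisors of an $A$-code, returns $H$ defined recursively: (1) If the first column of $G$ is zero: if $l=1$, $H=(1)$; otherwise $H=\begin{pmatrix}1&0\\0&H'\end{pmatrix}$, where $H'$ is the output on $G$ with its first column deleted. (2) Otherwise: if $l=1$, $H=(h_{1,1})$ where $h_{1,1}$ is the image in $A$ of $f/g_{1,1}$. If $l>1$: let $H'=I_{l-1}$ if $k=1$, and otherwise let $H'$ be the output on $G$ with its first row and first column deleted; index the entries of $H'$ as $h'_{ij}$, $2\le i\le s$, $2\le j\le l$. Then $H$ has first row $(h_{1,1},0,\ldots,0)$ with $h_{1,1}$ the image of $f/g_{1,1}$, and for $2\le i\le s$ its $i$-th row is $(\alpha_i,h'_{i2},\ldots,h'_{il})$, where $\alpha_i$ is the remainder modulo the polynomial $f/g_{1,1}$ of the polynomial $-\bigl(\sum_{j=2}^l h'_{ij}g_{1j}\bigr)/g_{1,1}$ (entries regarded as polynomials of degree $<m$; this quotient is a polynomial). *)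

(* Defs.v *)
(* A = F[x]/<f> is rendered as MathComp's {poly %/ f}
   (qpoly.v): polynomials of size < size f, with multiplication mod f
   (valid as the intended quotient when f is monic with 1 < size f). *)
From HB Require Import structures.
From mathcomp Require Import all_boot all_order all_algebra.
Set Implicit Arguments. Unset Strict Implicit. Unset Printing Implicit Defensive.
Import Order.TTheory GRing.Theory.
Local Open Scope ring_scope.

Section Codes.
Variables (F : finFieldType) (f : {poly F}) (l : nat).
Local Notation A := {poly %/ f}.
Local Notation V := 'rV[A]_l.

Definition is_Acode (C : {set V}) : Prop :=
  [/\ (0 : V) \in C,
      (forall u v, u \in C -> v \in C -> u + v \in C) &
      (forall (a : A) u, u \in C -> a *: u \in C)].

Definition nzset (S : {set V}) : bool := [exists u in S, u != 0].

Definition dual (C : {set V}) : {set V} :=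
  [set a : V | [forall c in C, \sum_(i < l) a 0 i * c 0 i == 0]].

Definition rev_rV (u : V) : V := \row_(j < l) u 0 (rev_ord j).

Definition recip_dual (C : {set V}) : {set V} := [set rev_rV u | u in dual C].

Definition rowseq (u : V) : seq A := [seq u 0 j | j <- enum 'I_l].

(* j-th entry (0-based) regarded as a polynomial of degree < m *)
Definition ent (u : V) (j : nat) : {poly F} := (nth 0 (rowseq u) j : {poly F}).

(* leading index (0-based); equals l for the zero vector (acts as +infinity) *)
Definition Lind (u : V) : nat := find (fun a => a != 0) (rowseq u).

Definition Lcoef (u : V) : {poly F} := ent u (Lind u).

Definition LindS (S : {set V}) : nat := \big[minn/l]_(u in S | u != 0) Lind u.

Definition leading_elt (S : {set V}) (c : V) : Prop :=
  [/\ c \in S, c != 0, Lind c = LindS S, Lcoef c \is monic &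
      forall c', c' \in S -> Lind c' = LindS S -> Lcoef c' \is monic ->
        (size (Lcoef c) <= size (Lcoef c'))%N].

(* filt C n = C^(n+1) *)
Fixpoint filt (C : {set V}) (n : nat) : {set V} :=
  match n with
  | 0 => C
  | n'.+1 => [set c in filt C n' | (LindS (filt C n') < Lind c)%N]
  end.

Definition basis_of_divisors (C : {set V}) (k : nat) (G : 'M[A]_(k, l)) : Prop :=
  (forall i : 'I_k, leading_elt (filt C i) (row i G)) /\ ~~ nzset (filt C k).

Definition is_CGM (C : {set V}) (k : nat) (G : 'M[A]_(k, l)) : Prop :=
  basis_of_divisors C G /\
  forall i t : 'I_k, (t < i)%N ->
    (size (ent (row t G) (Lind (row i G))) < size (ent (row i G) (Lind (row i G))))%N.

End Codes.

Section Algo.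
Variables (F : fieldType) (f : {poly F}).

Definition idseq (n : nat) : seq (seq {poly F}) :=
  mkseq (fun i => mkseq (fun j => ((i == j)%:R : {poly F})) n) n.

Fixpoint gen_mat_dual (l : nat) (G : seq (seq {poly F})) : seq (seq {poly F}) :=
  match l with
  | 0 => [::]
  | l'.+1 =>
    if all (fun r => head 0 r == 0) G then
      (1 :: nseq l' 0) :: map (cons 0) (gen_mat_dual l' (map behead G))
    else
      let g1 := head [::] G in
      let g11 := head 0 g1 in
      let q := f %/ g11 in
      let H' := if size G == 1%N then idseq l'
                else gen_mat_dual l' (map behead (behead G)) in
      ((q %% f) :: nseq l' 0) ::
        map (fun hr => (((- \sum_(j < l') hr`_j * g1`_j.+1) %/ g11) %% q) :: hr) H'
  end.
End Algo.

Section Recip.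
Variables (F : finFieldType) (f : {poly F}) (l k : nat).
Local Notation A := {poly %/ f}.

Definition mx_to_seq (G : 'M[A]_(k, l)) : seq (seq {poly F}) :=
  [seq [seq (G i j : {poly F}) | j <- enum 'I_l] | i <- enum 'I_k].

Definition Htilde (G : 'M[A]_(k, l)) : seq (seq A) :=
  [seq r <- map (map (in_qpoly f)) (gen_mat_dual f l (mx_to_seq G)) | has (fun a => a != 0) r].

Definition HR (G : 'M[A]_(k, l)) : 'M[A]_(size (Htilde G), l) :=
  \matrix_(i < size (Htilde G), j < l)
     nth 0 (nth [::] (Htilde G) (size (Htilde G) - i.+1)) (l - j.+1).
End Recip.

(* Main.v *)
Require Import Defs.
From HB Require Import structures.
From mathcomp Require Import all_boot all_order all_algebra.
Local Open Scope ring_scope.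

Module Helpers.
Set Implicit Arguments. Unset Strict Implicit. Unset Printing Implicit Defensive.
Import Order.TTheory GRing.Theory.


Section Part2.
Variables (F : fieldType) (f : {poly F}).
Hypotheses (hmon : f \is monic) (hsz : (1 < size f)%N).
Local Notation P := {poly F}.

Definition NZ (s : seq P) := has (fun p => p != 0) s.
Definition lind (s : seq P) := find (fun p => p != 0) s.
Definition lc (s : seq P) := nth 0 s (lind s).
Definition red (s : seq P) := all (fun p : P => (size p < size f)%N) s.
Fixpoint dotp (a g : seq P) : P :=
  match a, g with x :: a', y :: g' => x * y + dotp a' g' | _, _ => 0 end.

Lemma lind_cons0 s : lind (0 :: s) = (lind s).+1.
Proof. by rewrite /lind /= eqxx. Qed.
Lemma lind_consN x s : x != 0 -> lind (x :: s) = 0%N.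
Proof. by rewrite /lind /= => ->. Qed.
Lemma lc_cons0 s : lc (0 :: s) = lc s.
Proof. by rewrite /lc lind_cons0. Qed.
Lemma lc_consN x s : x != 0 -> lc (x :: s) = x.
Proof. by move=> h; rewrite /lc lind_consN. Qed.
Lemma NZ_cons x s : NZ (x :: s) = (x != 0) || NZ s.
Proof. by []. Qed.
Lemma lind_lt s : NZ s -> (lind s < size s)%N.
Proof. by rewrite /NZ has_find. Qed.
Lemma lind_rcons m x : NZ m -> lind (rcons m x) = lind m.
Proof. by rewrite /lind /NZ -cats1 find_cat => ->. Qed.
Lemma lc_rcons m x : NZ m -> lc (rcons m x) = lc m.
Proof. by move=> h; rewrite /lc lind_rcons // nth_rcons lind_lt. Qed.
Lemma nNZ_nth s j : ~~ NZ s -> nth 0 s j = 0.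
Proof.
rewrite /NZ => /hasPn h; case: (ltnP j (size s)) => hj; last by rewrite nth_default.
by apply/eqP; have := h _ (mem_nth 0 hj); rewrite negbK.
Qed.
Lemma nNZ_nseq s : ~~ NZ s -> s = nseq (size s) 0.
Proof.
move=> h; apply: (@eq_from_nth _ 0); first by rewrite size_nseq.
by move=> i hi; rewrite nth_nseq hi nNZ_nth.
Qed.
Lemma NZ_nseq n : ~~ NZ (nseq n 0).
Proof. by rewrite /NZ has_nseq eqxx andbF. Qed.
Lemma lind_rcons0 n x : x != 0 -> lind (rcons (nseq n 0) x) = n.
Proof.
move=> hx; have := NZ_nseq n; rewrite /NZ => /negbTE.
rewrite /lind -cats1 find_cat => -> ; rewrite size_nseq /=.
by rewrite hx addn0.
Qed.
Lemma lc_rcons0 n x : x != 0 -> lc (rcons (nseq n 0) x) = x.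
Proof.
by move=> hx; rewrite /lc lind_rcons0 // nth_rcons size_nseq ltnn eqxx.
Qed.
Lemma NZ_rcons m x : NZ (rcons m x) = NZ m || (x != 0).
Proof. by rewrite /NZ has_rcons orbC. Qed.
Lemma dotp0 a n : dotp a (nseq n 0) = 0.
Proof. by elim: a n => [|x a IH] [|n] //=; rewrite mulr0 add0r IH. Qed.
Lemma dotp0l a n : dotp (nseq n 0) a = 0.
Proof. by elim: n a => [|n IH] [|x a] //=; rewrite mul0r add0r IH. Qed.
Lemma dotp_sum n a g : size a = n -> size g = n ->
  dotp a g = \sum_(j < n) a`_j * g`_j.
Proof.
elim: n a g => [|n IH] [|x a] [|y g] //=; first by rewrite big_ord0.
by move=> [ha] [hg]; rewrite big_ord_recl /= IH.
Qed.

Lemma red_cons x s : red (x :: s) = (size x < size f)%N && red s.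
Proof. by []. Qed.
Lemma red_rcons s x : red (rcons s x) = red s && (size x < size f)%N.
Proof. by rewrite /red all_rcons andbC. Qed.
Lemma red_nseq n : red (nseq n 0).
Proof. by rewrite /red all_nseq size_poly0 (ltn_trans _ hsz) ?orbT. Qed.

Definition D0 n (G : seq (seq P)) (a : seq P) : Prop :=
  [/\ size a = n, red a & forall i, (i < size G)%N -> f %| dotp a (nth [::] G i)].

Definition Inv n (G : seq (seq P)) : Prop :=
  [/\ (forall i, (i < size G)%N ->
        [/\ size (nth [::] G i) = n, (lind (nth [::] G i) < n)%N,
            lc (nth [::] G i) \is monic & lc (nth [::] G i) %| f]),
      (forall i j, (i < j)%N -> (j < size G)%N ->
         (lind (nth [::] G i) < lind (nth [::] G j))%N) &
      (forall i, (i < size G)%N -> forall a,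
         (forall j, (i < j)%N -> (j < size G)%N -> f %| dotp a (nth [::] G j)) ->
         size a = n -> red a ->
         f %| (f %/ lc (nth [::] G i)) * dotp a (nth [::] G i))].

Definition OutD n (D : seq P -> Prop) (M : seq (seq P)) : Prop :=
  [/\ (forall i, (i < size M)%N ->
        [/\ size (nth [::] M i) = n, red (nth [::] M i), D (rev (nth [::] M i)),
            NZ (nth [::] M i) & lc (nth [::] M i) \is monic]),
      (forall t i, (t < i)%N -> (i < size M)%N ->
         (lind (nth [::] M t) < lind (nth [::] M i))%N),
      (forall c, size c = n -> red c -> D (rev c) -> NZ c ->
         exists2 i, (i < size M)%N &
           lind (nth [::] M i) = lind c /\ lc (nth [::] M i) %| lc c) &
      (forall t i, (t < i)%N -> (i < size M)%N ->
         (size (nth (0%R:P) (nth [::] M t) (lind (nth [::] M i))) <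
          size (lc (nth [::] M i)))%N)].


Lemma OutD_nil D : OutD 0 D [::].
Proof.
split=> // c hc _ _; rewrite /NZ; case: c hc => //.
Qed.

Definition stepM n (M' : seq (seq P)) (beta : seq P -> P) (b : bool) (z : P) :=
  if b then rcons (map (fun m => rcons m (beta m)) M') (rcons (nseq n 0) z)
  else map (fun m => rcons m (beta m)) M'.

Lemma size_stepM n M' beta b z : size (stepM n M' beta b z) = (size M' + b)%N.
Proof. by rewrite /stepM; case: b; rewrite ?size_rcons size_map ?addn1 ?addn0. Qed.

Lemma nth_stepM n M' beta b z i : nth [::] (stepM n M' beta b z) i =
  if (i < size M')%N then rcons (nth [::] M' i) (beta (nth [::] M' i))
  else if b && (i == size M') then rcons (nseq n 0) z else [::].
Proof.
rewrite /stepM; case: b; last first.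
  case: ltnP => h; first by rewrite (nth_map [::]).
  by rewrite nth_default // size_map.
rewrite nth_rcons size_map /=; case: ltnP => h //.
by rewrite (nth_map [::]).
Qed.

Lemma step_gen n (D' D : seq P -> Prop) M' beta (b : bool) z :
  OutD n D' M' ->
  (forall m, D' (rev m) -> size m = n -> red m ->
      D (beta m :: rev m) /\ (size (beta m) < size f)%N) ->
  (b -> [/\ D (z :: nseq n 0), z \is monic & (size z < size f)%N]) ->
  (forall x a, D (x :: a) -> D' a) ->
  (forall x, x != 0 -> D (x :: nseq n 0) -> (size x < size f)%N -> b /\ z %| x) ->
  (b -> forall i, (i < size M')%N -> (size (beta (nth [::] M' i)) < size z)%N) ->
  OutD n.+1 D (stepM n M' beta b z).
Proof.
move=> [O1 O2 O3 O4] H1 H2 H3 H4 H5.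
have lastrow : b -> [/\ lind (rcons (nseq n 0) z) = n,
    lc (rcons (nseq n 0) z) = z & z != 0].
  move=> hb; have [_ zm _] := H2 hb; have z0 : z != 0 by apply: monic_neq0.
  by rewrite lind_rcons0 // lc_rcons0.
split.
- move=> i; rewrite size_stepM nth_stepM => hi0; case: (ltnP i (size M')) => hi.
    have [s1 r1 d1 n1 m1] := O1 _ hi.
    have [d2 sb] := H1 _ d1 s1 r1.
    by rewrite size_rcons s1 red_rcons r1 sb rev_rcons NZ_rcons n1 lc_rcons.
  have [hb ei] : b /\ i = size M'.
    case: b hi0 {H2 H4 H5 lastrow} => /=; rewrite ?addn0 ?addn1 ?ltnS => hi'.
      by split=> //; apply/eqP; rewrite eqn_leq hi hi'.
    by rewrite ltnNge hi in hi'.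
  rewrite hb ei eqxx /=; have [dz zm sz] := H2 hb; have [_ -> z0] := lastrow hb.
  rewrite size_rcons size_nseq red_rcons red_nseq sz rev_rcons rev_nseq.
  by rewrite NZ_rcons z0 orbT.
- move=> t i ti; rewrite size_stepM !nth_stepM => hi.
  have ht : (t < size M')%N.
    case: b hi {H2 H4 H5 lastrow} => /= hi; last by rewrite addn0 in hi; exact: ltn_trans ti hi.
    by rewrite addn1 ltnS in hi; exact: leq_trans ti hi.
  rewrite ht; have [s1 r1 d1 n1 m1] := O1 _ ht.
  case: (ltnP i (size M')) => hi2.
    have [_ _ _ n2 _] := O1 _ hi2.
    by rewrite !lind_rcons // O2.
  have [hb ei] : b /\ i = size M'.
    case: b hi {H2 H4 H5 lastrow} => /=; rewrite ?addn0 ?addn1 ?ltnS => hi'.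
      by split=> //; apply/eqP; rewrite eqn_leq hi2 hi'.
    by rewrite ltnNge hi2 in hi'.
  rewrite hb ei eqxx /=; have [-> _ _] := lastrow hb.
  by rewrite lind_rcons // -s1 lind_lt.
- move=> c; case/lastP: c => [//|c' x]; rewrite size_rcons => -[sc].
  rewrite red_rcons rev_rcons => /andP[rc sx] dc.
  rewrite NZ_rcons; have d' := H3 _ _ dc.
  case nc: (NZ c') => /= hx.
    have [i hi [e1 e2]] := O3 _ sc rc d' nc.
    have [s1 r1 d1 n1 m1] := O1 _ hi.
    exists i; first by rewrite size_stepM ltn_addr.
    by rewrite nth_stepM hi lind_rcons // lc_rcons // lind_rcons // lc_rcons.
  have ec : c' = nseq n 0 by rewrite (nNZ_nseq (negbT nc)) sc.
  rewrite ec rev_nseq in dc; have [hb hz] := H4 _ hx dc sx.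
  exists (size M'); first by rewrite size_stepM hb addn1.
  rewrite nth_stepM ltnn hb eqxx /=; have [-> -> _] := lastrow hb.
  by rewrite ec lind_rcons0 // lc_rcons0.
- move=> t i ti; rewrite size_stepM !nth_stepM => hi.
  have ht : (t < size M')%N.
    case: b hi {H2 H4 H5 lastrow} => /= hi; last by rewrite addn0 in hi; exact: ltn_trans ti hi.
    by rewrite addn1 ltnS in hi; exact: leq_trans ti hi.
  rewrite ht; have [s1 r1 d1 n1 m1] := O1 _ ht.
  case: (ltnP i (size M')) => hi2.
    have [s2 _ _ n2 _] := O1 _ hi2.
    rewrite lind_rcons // lc_rcons // nth_rcons.
    by rewrite s1 -s2 lind_lt // O4.
  have [hb ei] : b /\ i = size M'.
    case: b hi {H2 H4 H5 lastrow} => /=; rewrite ?addn0 ?addn1 ?ltnS => hi'.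
      by split=> //; apply/eqP; rewrite eqn_leq hi2 hi'.
    by rewrite ltnNge hi2 in hi'.
  rewrite hb ei eqxx /=; have [-> -> _] := lastrow hb.
  by rewrite nth_rcons s1 ltnn eqxx H5.
Qed.

Lemma q_facts d : d \is monic -> d %| f ->
  [/\ f %/ d * d = f, f %/ d != 0, f %/ d \is monic,
      (size (f %/ d)%R <= size f)%N &
      ((f %/ d) %% f != 0 -> (f %/ d) %% f = f %/ d /\ (size (f %/ d)%R < size f)%N)].
Proof.
move=> dm df; have qd := divpK df.
have f0 : f != 0 by apply: monic_neq0.
have q0 : f %/ d != 0 by apply: contra f0 => /eqP q0; rewrite -qd q0 mul0r.
have qm : f %/ d \is monic by rewrite -(monicMl _ dm) mulrC qd.
have sf : size f = (size (f %/ d) + size d).-1 by rewrite -{1}qd size_Mmonic.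
have sd : (0 < size d)%N by rewrite size_poly_gt0 monic_neq0.
have sq : (size (f %/ d)%R <= size f)%N.
  by rewrite sf -subn1 -addnBA // leq_addr.
split=> // hm.
suff lt : (size (f %/ d)%R < size f)%N by rewrite modp_small.
rewrite ltn_neqAle sq andbT; apply/eqP => eqs.
have sd1 : size d = 1%N.
  move: sf; rewrite eqs; case: (size d) sd => // k _.
  by rewrite addnS /= -{1}(addn0 (size f)) => /eqP; rewrite eqn_add2l => /eqP <-.
have d1 : d = 1.
  move/eqP: dm; rewrite /lead_coef sd1 /= => d01.
  by rewrite [d]size1_polyC ?sd1 // d01.
by move: hm; rewrite d1 divp1 modpp eqxx.
Qed.

Lemma alpha_facts d q S : q * d = f -> q != 0 -> d != 0 -> f %| q * S ->
  f %| ((- S) %/ d) %% q * d + S /\ (size (((- S) %/ d) %% q)%R < size q)%N.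
Proof.
move=> qd q0 d0 hS; split; last by rewrite ltn_modp.
have dS : d %| S by rewrite -(dvdp_mul2l _ _ q0) qd.
set u := (- S) %/ d.
have ud : u * d = - S by rewrite divpK // dvdpNr.
have e : u %% q = u - u %/ q * q.
  by apply/eqP; rewrite eq_sym subr_eq addrC -divp_eq.
rewrite e mulrBl ud -mulrA qd addrAC addNr add0r dvdpNr.
by apply: dvdp_mull; apply: dvdpp.
Qed.

Lemma sum_nNZ n hr (c : seq P) : ~~ NZ hr -> \sum_(j < n) hr`_j * c`_j = 0.
Proof. by move=> h; apply: big1 => j _; rewrite nNZ_nth // mul0r. Qed.

Lemma D0_nseq n G : D0 n G (nseq n 0).
Proof. by split; rewrite ?size_nseq ?red_nseq // => i _; rewrite dotp0l dvdp0. Qed.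

Lemma split0 (g : seq P) : head 0 g = 0 -> (0 < size g)%N -> g = 0 :: behead g.
Proof. by case: g => //= x g ->. Qed.

Lemma dotp_cons0 x a g : dotp (x :: a) (0 :: g) = dotp a g.
Proof. by rewrite /= mulr0 add0r. Qed.

Lemma Inv_tail n g G : Inv n (g :: G) -> Inv n G.
Proof.
move=> [I1 I2 I3]; split.
- by move=> i hi; exact: (I1 i.+1 hi).
- by move=> i j ij hj; exact: (I2 i.+1 j.+1 ij hj).
- move=> i hi a ha; apply: (I3 i.+1 hi) => -[|j] // ij hj.
  exact: ha.
Qed.

Lemma Inv_behead n G : Inv n.+1 G ->
  (forall i, (i < size G)%N -> head 0 (nth [::] G i) = 0) -> Inv n (map behead G).
Proof.
move=> [I1 I2 I3] hz.
have e : forall i, (i < size G)%N -> nth [::] G i = 0 :: behead (nth [::] G i).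
  move=> i hi; apply: split0; first exact: hz.
  by have [-> _ _ _] := I1 i hi.
split; rewrite size_map.
- move=> i hi; rewrite (nth_map [::]) //.
  have [s1 l1 m1 d1] := I1 i hi; have ei := e i hi.
  rewrite ei lind_cons0 in l1; rewrite ei lc_cons0 in m1 d1.
  by rewrite size_behead s1.
- move=> i j ij hj; rewrite !(nth_map [::]) //; last exact: ltn_trans ij hj.
  have := I2 i j ij hj; rewrite (e i (ltn_trans ij hj)) (e j hj).
  by rewrite !lind_cons0.
- move=> i hi a ha sa ra; rewrite (nth_map [::]) //.
  have h := I3 i hi (0 :: a); rewrite {1 2}(e i hi) lc_cons0 dotp_cons0 in h.
  apply: h.
  + move=> j ij hj; rewrite (e j hj) dotp_cons0.
    by have := ha j ij hj; rewrite (nth_map [::]).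
  + by rewrite /= sa.
  + by rewrite red_cons ra andbT size_poly0 (ltn_trans _ hsz).
Qed.

Lemma D0_cons0 n G x a :
  (forall i, (i < size G)%N -> nth [::] G i = 0 :: behead (nth [::] G i)) ->
  (D0 n.+1 G (x :: a) <-> (size x < size f)%N /\ D0 n (map behead G) a).
Proof.
move=> e; rewrite /D0 red_cons size_map; split.
- move=> [[sa] /andP[sx ra] hd]; split=> //; split=> // i hi.
  by rewrite (nth_map [::]) // -(dotp_cons0 x) -(e i hi) hd.
- move=> [sx [sa ra hd]]; split; first by rewrite /= sa.
    by rewrite sx ra.
  move=> i hi.
  by rewrite (e i hi) dotp_cons0 -(nth_map [::] [::]) // hd.
Qed.

Lemma D0_cons n d g' G2 x a :
  (forall i, (i < size G2)%N -> nth [::] G2 i = 0 :: behead (nth [::] G2 i)) ->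
  (D0 n.+1 ((d :: g') :: G2) (x :: a) <->
   [/\ (size x < size f)%N, D0 n (map behead G2) a & f %| x * d + dotp a g']).
Proof.
move=> e; rewrite /D0 red_cons size_map; split.
- move=> [[sa] /andP[sx ra] hd]; split=> //; last exact: (hd 0%N).
  split=> // i hi.
  by rewrite (nth_map [::]) // -(dotp_cons0 x) -(e i hi); exact: (hd i.+1).
- move=> [sx [sa ra hd] h0]; split; first by rewrite /= sa.
    by rewrite sx ra.
  move=> -[|i] // hi; rewrite ltnS in hi.
  change (f %| dotp (x :: a) (nth [::] G2 i)).
  by rewrite (e i hi) dotp_cons0 -(nth_map [::] [::]) // hd.
Qed.

Lemma gmd_nil n : gen_mat_dual f n [::] = idseq F n.
Proof.
elim: n => [//|n IH] /=; rewrite IH /idseq.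
apply: (@eq_from_nth _ [::]); first by rewrite [size (_ :: _)]/= size_map !size_mkseq.
move=> i; rewrite [size (_ :: _)]/= size_map size_mkseq ltnS => hi.
case: i hi => [|i] hi.
  rewrite nth_mkseq // [nth _ _ 0]/=.
  apply: (@eq_from_nth _ 0); first by rewrite size_mkseq [size _]/= size_nseq.
  move=> j; rewrite [size _]/= size_nseq ltnS => hj; rewrite nth_mkseq //.
  by case: j hj => [|j] hj //=; rewrite nth_nseq hj.
rewrite [nth _ _ i.+1]/= (nth_map [::]) ?size_mkseq // !nth_mkseq //.
apply: (@eq_from_nth _ 0); first by rewrite [size (_ :: _)]/= !size_mkseq.
move=> j; rewrite [size (_ :: _)]/= size_mkseq ltnS => hj; rewrite nth_mkseq //.
by case: j hj => [|j] hj //=; rewrite nth_mkseq.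
Qed.

Definition Mof (H : seq (seq P)) := rev (map rev (filter NZ H)).

Lemma Mof_cons x H : Mof (x :: H) = if NZ x then rcons (Mof H) (rev x) else Mof H.
Proof. by rewrite /Mof /=; case: ifP => // _; rewrite /= rev_cons. Qed.

Lemma Mof_map (phi : seq P -> seq P) H : (forall hr, NZ (phi hr) = NZ hr) ->
  Mof (map phi H) = map (fun m => rev (phi (rev m))) (Mof H).
Proof.
move=> hphi; rewrite /Mof filter_map (eq_filter (a2 := NZ)); last by move=> x /=.
rewrite map_rev -!map_comp; congr rev; apply: eq_map => x /=; by rewrite revK.
Qed.

Theorem gmd_correct n G : Inv n G -> OutD n (D0 n G) (Mof (gen_mat_dual f n G)).
Proof.
elim: n G => [|n IH] G hI; first exact: OutD_nil.
rewrite [gen_mat_dual f n.+1 G]/=; case: ifP => hall.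
  have [I1 I2 I3] := hI.
  have hz : forall i, (i < size G)%N -> head 0 (nth [::] G i) = 0.
    by move/allP: hall => h i hi; apply/eqP; apply: h; apply: mem_nth.
  have e : forall i, (i < size G)%N -> nth [::] G i = 0 :: behead (nth [::] G i).
    move=> i hi; apply: split0; first exact: hz.
    by have [-> _ _ _] := I1 i hi.
  have O' := IH _ (Inv_behead hI hz).
  rewrite Mof_cons Mof_map; last by move=> hr; rewrite NZ_cons eqxx.
  rewrite NZ_cons oner_neq0 /=.
  set M' := Mof _.
  have em : [seq rev (0 :: rev m) | m <- M'] = map (fun m => rcons m 0) M'.
    by apply: eq_map => m; rewrite rev_cons revK.
  rewrite em rev_cons rev_nseq.
  change (OutD n.+1 (D0 n.+1 G) (stepM n M' (fun _ => 0) true 1)).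
  have HD := fun x a => D0_cons0 n x a e.
  apply: step_gen O' _ _ _ _ _.
  - move=> m dm sm rm; rewrite size_poly0 (ltn_trans _ hsz) //; split=> //.
    by apply/HD; rewrite size_poly0 (ltn_trans _ hsz).
  - move=> _; rewrite monic1 size_poly1; split=> //.
    by apply/HD; split; [rewrite size_poly1 | exact: D0_nseq].
  - by move=> x a /HD[].
  - by move=> x _ _ _; rewrite dvd1p.
  - by move=> _ i _; rewrite size_poly0 size_poly1.
case: G hI hall => [|g G2] hI hall; first by [].
have [I1 I2 I3] := hI.
have [sg lg mg dg] := I1 0%N isT.
rewrite [nth _ _ 0]/= in sg lg mg dg.
case: g sg lg mg dg hI I1 I2 I3 hall => [//|d g'] [sg] lg mg dg hI I1 I2 I3 hall.
have hz2 : forall i, (i < size G2)%N -> head 0 (nth [::] G2 i) = 0.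
  move=> i hi; have [s1 _ _ _] := I1 i.+1 hi; have lt := I2 0%N i.+1 isT hi.
  move: s1 lt; rewrite [nth _ _ i.+1]/= [nth _ _ 0]/=.
  case: (nth [::] G2 i) => [|x r] //= _.
  by case: (eqVneq x 0) => // x0; rewrite lind_consN.
have hall2 : all (fun r => head 0 r == 0) G2.
  by apply/(all_nthP [::]) => i hi; rewrite hz2.
rewrite /= hall2 andbT in hall.
have d0 : d != 0 by rewrite hall.
rewrite lc_consN // in mg dg.
have e2 : forall i, (i < size G2)%N -> nth [::] G2 i = 0 :: behead (nth [::] G2 i).
  move=> i hi; apply: split0; first exact: hz2.
  by have [-> _ _ _] := I1 i.+1 hi.
have hI2 := Inv_behead (Inv_tail hI) hz2.
have O' := IH _ hI2.
have [qd q0 qm sq hm] := q_facts mg dg.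
set q := f %/ d in qd q0 qm sq hm.
set alph := fun hr : seq P => ((- \sum_(j < n) hr`_j * g'`_j) %/ d) %% q.
have Hq : forall a, D0 n (map behead G2) a -> f %| q * dotp a g'.
  move=> a [sa ra ha].
  have := I3 0%N isT (0 :: a); rewrite [nth _ _ 0]/= lc_consN // /= mul0r add0r.
  apply; last 2 first.
  - by rewrite /= sa.
  - by apply/andP; split; [rewrite size_poly0 (ltn_trans _ hsz) | exact: ra].
  move=> -[|j] // _ hj; rewrite ltnS in hj.
  change (f %| dotp (0 :: a) (nth [::] G2 j)); rewrite (e2 j hj) dotp_cons0.
  by rewrite -(nth_map [::] [::]) //; apply: ha; rewrite size_map.
rewrite [head [::] _]/= [head 0 _]/= -/q.
set H' := (if _ then _ else _).
have eH : H' = gen_mat_dual f n (map behead G2).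
  by rewrite /H'; case: (G2) => [|h G3] //=; rewrite gmd_nil.
rewrite eH Mof_cons Mof_map; last first.
  move=> hr; rewrite NZ_cons; case nh: (NZ hr); first by rewrite orbT.
  by rewrite orbF sum_nNZ ?nh // oppr0 div0p mod0p eqxx.
set M' := Mof _.
have em : [seq rev ((- (\sum_(j < n) (rev m)`_j * (d :: g')`_j.+1) %/ d) %% q
                :: rev m) | m <- M'] = map (fun m => rcons m (alph (rev m))) M'.
  by apply: eq_map => m; rewrite rev_cons revK.
rewrite em NZ_cons (negbTE (NZ_nseq n)) orbF rev_cons rev_nseq.
change (OutD n.+1 (D0 n.+1 ((d :: g') :: G2))
   (stepM n M' (fun m => alph (rev m)) (q %% f != 0) (q %% f))).
have HD := fun x a => D0_cons n d g' x a e2.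
have sg' : size g' = n by [].
apply: step_gen O' _ _ _ _ _.
- move=> m dm sm rm; set hr := rev m.
  have shr : size hr = n by rewrite size_rev.
  have [dv sa] := alpha_facts qd q0 d0 (Hq _ dm).
  have eS : \sum_(j < n) hr`_j * g'`_j = dotp hr g' by rewrite (dotp_sum shr sg').
  have sa' : (size (alph hr) < size f)%N.
    by rewrite /alph eS; apply: leq_trans sa sq.
  split=> //; apply/HD; split=> //.
  by rewrite /alph eS.
- move=> hb; have [e1 s1] := hm hb; rewrite e1; split=> //.
  apply/HD; split=> //; first exact: D0_nseq.
  by rewrite dotp0l addr0 qd dvdpp.
- by move=> x a /HD[].
- move=> x x0 /HD[_ _] + sx; rewrite dotp0l addr0 -{1}qd dvdp_mul2r // => qx.
  case: (eqVneq (q %% f) 0) => hb /=.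
    move/modp_eq0P: hb => fq.
    have := dvdp_leq x0 (dvdp_trans fq qx); rewrite leqNgt sx //.
  by have [-> _] := hm hb.
- move=> hb i hi; have [e1 _] := hm hb; rewrite e1.
  by rewrite /alph ltn_modp.
Qed.

End Part2.



Section Part3.
Variables (F : finFieldType) (f : {poly F}).
Hypotheses (hmon : f \is monic) (hsz : (1 < size f)%N).
Local Notation P := {poly F}.
Local Notation A := {poly %/ f}.
Variable l : nat.
Local Notation V := 'rV[A]_l.

Lemma mkf : mk_monic f = f.
Proof. by rewrite /mk_monic hsz hmon. Qed.

Lemma rmodp_mk p : Pdiv.Ring.rmodp p (mk_monic f) = p %% f.
Proof. by rewrite mkf (Pdiv.IdomainMonic.modpE hmon). Qed.

Lemma valM (a b : A) : ((a * b : A) : P) = ((a : P) * (b : P)) %% f.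
Proof. by rewrite poly_of_qpolyM rmodp_mk. Qed.

Lemma val_inq (p : P) : (in_qpoly f p : P) = p %% f.
Proof. by rewrite /in_qpoly /= rmodp_mk. Qed.

Lemma size_A (a : A) : (size (a : P) < size f)%N.
Proof. by apply: leq_trans (size_mk_monic a) _; rewrite mkf. Qed.

Lemma valN (a : A) : ((- a : A) : P) = - (a : P).
Proof. by rewrite raddfN. Qed.

Lemma valB (a b : A) : ((a - b : A) : P) = (a : P) - (b : P).
Proof. by rewrite raddfB. Qed.

Lemma inq_small (p : P) : (size p < size f)%N -> (in_qpoly f p : P) = p.
Proof. by move=> h; rewrite val_inq modp_small. Qed.

Definition rs (u : V) : seq P := [seq (u 0 j : P) | j <- enum 'I_l].

Lemma rs_rowseq u : rs u = map val (rowseq u).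
Proof. by rewrite /rs /rowseq; elim: (enum _) => //= x s ->. Qed.

Lemma size_rs u : size (rs u) = l.
Proof. by rewrite size_map size_enum_ord. Qed.

Lemma nth_rs u (i : 'I_l) : nth 0 (rs u) i = u 0 i.
Proof. by rewrite (nth_map i) ?size_enum_ord // nth_ord_enum. Qed.

Lemma nth_map_val (s : seq A) j : nth 0 (map val s) j = (nth 0 s j : P).
Proof.
case: (ltnP j (size s)) => h; first by rewrite (nth_map 0).
by rewrite !nth_default ?size_map.
Qed.

Lemma Lind_rs u : Lind u = lind (rs u).
Proof. by rewrite /Lind /lind rs_rowseq (find_map val); apply: eq_find. Qed.

Lemma ent_rs u j : ent u j = nth 0 (rs u) j.
Proof. by rewrite /ent rs_rowseq nth_map_val. Qed.

Lemma Lcoef_rs u : Lcoef u = lc (rs u).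
Proof. by rewrite /Lcoef /lc ent_rs Lind_rs. Qed.

Lemma red_rs u : red f (rs u).
Proof. by apply/allP => x /mapP[j _ ->]; apply: size_A. Qed.

Lemma NZ_rs u : NZ (rs u) = (u != 0).
Proof.
apply/idP/idP.
  case/hasP => x /mapP[j _ ->]; apply: contra => /eqP ->; by rewrite mxE.
move=> hu; apply/hasP; have [j hj] : exists j, u 0 j != 0.
  apply/existsP; move: hu; apply: contraR; rewrite negb_exists => /forallP h.
  by apply/eqP/rowP => j; rewrite mxE; apply/eqP; have := h j; rewrite negbK.
by exists (u 0 j : P); [apply/mapP; exists j; rewrite ?mem_enum | ].
Qed.

Lemma Lind_lt (u : V) : u != 0 -> (Lind u < l)%N.
Proof. by rewrite -NZ_rs Lind_rs => h; rewrite -[X in (_ < X)%N](size_rs u); apply: lind_lt. Qed.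

Lemma Lind0 : @Lind F f l 0 = l.
Proof.
rewrite /Lind hasNfind; first by rewrite /rowseq size_map size_enum_ord.
by apply/hasPn => x /mapP[j _ ->]; rewrite mxE; apply/negPn/eqP.
Qed.

Lemma find_eqj (p : pred P) (s : seq P) j : (j < size s)%N ->
  (forall i, (i < j)%N -> ~~ p (nth 0 s i)) -> p (nth 0 s j) -> find p s = j.
Proof.
elim: s j => [//|x s IH] [|j] /= hj hb hp; first by rewrite hp.
have := hb 0%N isT => /= /negbTE ->; congr S; apply: IH => // i hi.
exact: (hb i.+1).
Qed.

Lemma Lind_eq (u : V) (j : 'I_l) : (forall i : 'I_l, (i < j)%N -> u 0 i = 0) ->
  u 0 j != 0 -> Lind u = j /\ Lcoef u = (u 0 j : P).
Proof.
move=> hb hj; have e : Lind u = j.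
  rewrite Lind_rs /lind; apply: find_eqj; first by rewrite size_rs.
    move=> i hi; have hil : (i < l)%N := ltn_trans hi (ltn_ord j).
    by rewrite -[i]/(nat_of_ord (Ordinal hil)) nth_rs hb // negbK.
  by rewrite nth_rs.
by split=> //; rewrite Lcoef_rs /lc -Lind_rs e nth_rs.
Qed.

Lemma Lind_zero (u : V) (i : 'I_l) : (i < Lind u)%N -> u 0 i = 0.
Proof.
rewrite Lind_rs => h; have := before_find 0 h; rewrite nth_rs.
by move/negbFE => h0; apply/eqP.
Qed.

Lemma Lind_gtP (u : V) (t : nat) : (t < l)%N ->
  (t < Lind u)%N <-> (forall j : 'I_l, (j <= t)%N -> u 0 j = 0).
Proof.
move=> tl; split=> [h j jt|h]; first by apply: Lind_zero; apply: leq_ltn_trans h.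
rewrite ltnNge; apply/negP => hle.
have hs : (Lind u < l)%N := leq_ltn_trans hle tl.
have := hs; rewrite Lind_rs -[X in (_ < X)%N](size_rs u) -has_find => hh.
have := nth_find 0 hh; rewrite -/(lind (rs u)) -Lind_rs.
by rewrite -[Lind u]/(nat_of_ord (Ordinal hs)) nth_rs h // eqxx.
Qed.

Definition dotA (a c : V) : A := \sum_(i < l) a 0 i * c 0 i.

Lemma sum_modp I (r : seq I) (Fn : I -> P) :
  \sum_(i <- r) (Fn i %% f) = (\sum_(i <- r) Fn i) %% f.
Proof.
elim: r => [|x r IH]; first by rewrite !big_nil mod0p.
by rewrite !big_cons IH modpD.
Qed.

Lemma dotA_val a c : (dotA a c : P) = dotp (rs a) (rs c) %% f.
Proof.
rewrite /dotA poly_of_qpoly_sum (dotp_sum (n := l)) ?size_rs //.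
under eq_bigr do rewrite valM.
by rewrite -sum_modp; apply: eq_bigr => i _; rewrite !nth_rs.
Qed.

Lemma dotA_eq0 a c : (dotA a c == 0) = (f %| dotp (rs a) (rs c)).
Proof.
rewrite -[dotA a c == 0]/((dotA a c : P) == 0) dotA_val.
by apply/eqP/modp_eq0P.
Qed.

Lemma dotAD a u v : dotA a (u + v) = dotA a u + dotA a v.
Proof. by rewrite /dotA -big_split; apply: eq_bigr => i _; rewrite mxE mulrDr. Qed.

Lemma dotAZ a x u : dotA a (x *: u) = x * dotA a u.
Proof.
by rewrite /dotA mulr_sumr; apply: eq_bigr => i _; rewrite mxE mulrCA.
Qed.

Lemma dotA0 a : dotA a 0 = 0.
Proof. by rewrite /dotA big1 // => i _; rewrite mxE mulr0. Qed.

Lemma sub_val (a b x : A) : ((a - x * b : A) : P) = ((a : P) - (x : P) * (b : P)) %% f.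
Proof.
rewrite valB valM modpD modpN; congr (_ - _).
by rewrite modp_small // size_A.
Qed.

Lemma modp_sub_mul a b d : (a %% f - (b %% f) * d) %% f = (a - b * d) %% f.
Proof.
rewrite modpD modpN modp_id [in RHS]modpD [in RHS]modpN; congr (_ - _).
by rewrite mulrC modp_mul mulrC.
Qed.

Lemma bigmin_le_mem (I : eqType) (r : seq I) (Pr : pred I) (Fn : I -> nat) x0 i :
  i \in r -> Pr i -> (\big[minn/x0]_(j <- r | Pr j) Fn j <= Fn i)%N.
Proof.
elim: r => [//|x r IH]; rewrite in_cons big_cons => /orP[/eqP <-|hi] hp.
  by rewrite hp geq_minl.
case: (Pr x); last exact: IH.
by apply: leq_trans (geq_minr _ _) (IH hi hp).
Qed.

Lemma LindS_le (S : {set V}) c : c \in S -> c != 0 -> (LindS S <= Lind c)%N.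
Proof.
by move=> hc hc0; rewrite /LindS; apply: bigmin_le_mem; rewrite ?mem_index_enum ?hc.
Qed.

Lemma LindS_ge (S : {set V}) x : (x <= l)%N ->
  (forall c, c \in S -> c != 0 -> (x <= Lind c)%N) -> (x <= LindS S)%N.
Proof.
move=> xl h; rewrite /LindS; apply: (big_ind (fun m => x <= m)%N) => //.
  by move=> a b ha hb; rewrite leq_min ha hb.
by move=> c /andP[hc hc0]; apply: h.
Qed.

Lemma rs_rev (u : V) : rs (rev_rV u) = rev (rs u).
Proof.
apply: (@eq_from_nth _ 0); first by rewrite size_rev !size_rs.
move=> j; rewrite size_rs => hj.
rewrite -[j]/(nat_of_ord (Ordinal hj)) nth_rs mxE nth_rev ?size_rs //.
by rewrite -[(l - _)%N]/(nat_of_ord (rev_ord (Ordinal hj))) nth_rs.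
Qed.

Lemma rev_rVK (u : V) : rev_rV (rev_rV u) = u.
Proof. by apply/rowP => j; rewrite !mxE rev_ordK. Qed.

Lemma filtS_in (S : {set V}) n c :
  (c \in filt S n.+1) = (c \in filt S n) && (LindS (filt S n) < Lind c)%N.
Proof. by rewrite /= inE. Qed.

Lemma suff_CGM (S : {set V}) r (M : 'M[A]_(r, l)) :
  (forall i, row i M \in S) -> (forall i, row i M != 0) ->
  (forall i, Lcoef (row i M) \is monic) ->
  (forall t i : 'I_r, (t < i)%N -> (Lind (row t M) < Lind (row i M))%N) ->
  (forall c, c \in S -> c != 0 ->
     exists i, Lind c = Lind (row i M) /\ Lcoef (row i M) %| Lcoef c) ->
  (forall t i : 'I_r, (t < i)%N ->
     (size (ent (row t M) (Lind (row i M))) < size (Lcoef (row i M)))%N) ->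
  is_CGM S M.
Proof.
move=> hin hnz hmn hinc hcov hcgm.
have inc_le : forall t i : 'I_r, (t <= i)%N -> (Lind (row t M) <= Lind (row i M))%N.
  move=> t i; rewrite leq_eqVlt => /orP[/eqP e|lt]; last by apply: ltnW; apply: hinc.
  by have -> : t = i by apply: val_inj.
have hLS : forall n (hn : (n < r)%N),
   (forall c, c \in filt S n <-> c \in S /\
      forall t : 'I_r, (t < n)%N -> (Lind (row t M) < Lind c)%N) ->
   LindS (filt S n) = Lind (row (Ordinal hn) M).
  move=> n hn hc; apply/eqP; rewrite eqn_leq; apply/andP; split.
    apply: LindS_le => //; apply/hc; split=> // t ht.
    by apply: hinc.
  apply: LindS_ge; first by apply: ltnW; apply: Lind_lt.
  move=> c /hc[cS ct] c0; have [i [ei _]] := hcov c cS c0.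
  rewrite ei; apply: inc_le => /=; rewrite leqNgt; apply/negP => hi.
  by have := ct i hi; rewrite ei ltnn.
have hf : forall n, (n <= r)%N -> forall c, c \in filt S n <-> c \in S /\
      forall t : 'I_r, (t < n)%N -> (Lind (row t M) < Lind c)%N.
  elim=> [|n IH] hn c; first by split=> [h|[]] //; split=> // t.
  have hnr : (n < r)%N := hn.
  rewrite filtS_in (hLS n hnr (IH (ltnW hn))); split.
    move=> /andP[/(IH (ltnW hn))[cS ct] lt]; split=> // t.
    rewrite ltnS leq_eqVlt => /orP[/eqP e|]; last exact: ct.
    by have -> : t = Ordinal hnr by apply: val_inj.
  move=> [cS ct]; apply/andP; split; last exact: ct.
  by apply/(IH (ltnW hn)); split=> // t ht; apply: ct; apply: ltnW.
split; last by move=> i t ti; exact: hcgm.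
split.
  move=> i; have hi := ltn_ord i.
  have e := hLS i hi (hf i (ltnW hi)).
  have eo : Ordinal hi = i by apply: val_inj.
  rewrite eo in e.
  split=> //.
  - by apply/(hf i (ltnW hi)); split=> // t ht; apply: hinc.
  - move=> c' hc' lc' mc'.
    have c'0 : c' != 0.
      apply/eqP => c0; move: lc'; rewrite c0 Lind0 e => el.
      by have := Lind_lt (hnz i); rewrite -el ltnn.
    have [cS ct] := (hf i (ltnW hi) c').1 hc'.
    have [t [et dt]] := hcov c' cS c'0.
    have eti : t = i.
      apply/eqP; rewrite -[t == i]negbK; apply/negP => nti.
      move: et; rewrite lc' e; case: (ltngtP t i) => h.
      - by move=> et'; have := hinc t i h; rewrite et' ltnn.
      - by move=> et'; have := hinc i t h; rewrite et' ltnn.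
      - have e' : t = i by apply: val_inj.
        by rewrite e' eqxx in nti.
    rewrite -eti; apply: dvdp_leq => //; exact: monic_neq0.
apply/existsP => -[c /andP[hc c0]].
have [cS ct] := (hf r (leqnn r) c).1 hc.
have [i [ei _]] := hcov c cS c0.
by have := ct i (ltn_ord i); rewrite ei ltnn.
Qed.

Variables (k : nat) (C : {set V}) (G : 'M[A]_(k, l)).
Hypotheses (hC : is_Acode C) (hB : basis_of_divisors C G).

Lemma filt_inS n c : (c \in filt C n.+1) = (c \in filt C n) && (LindS (filt C n) < Lind c)%N.
Proof. by rewrite /= inE. Qed.

Lemma filt_mono m n : (m <= n)%N -> filt C n \subset filt C m.
Proof.
move/subnKC <-; elim: (n - m)%N => [|t IH]; first by rewrite addn0 subxx.
apply: subset_trans IH; rewrite addnS; apply/subsetP => x.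
by rewrite filt_inS => /andP[].
Qed.

Lemma filt_sub n : filt C n \subset C.
Proof. exact: (filt_mono (m := 0) (leq0n n)). Qed.

Lemma hL (i : 'I_k) : leading_elt (filt C i) (row i G).
Proof. by case: hB. Qed.

Lemma rowG_nz (i : 'I_k) : row i G != 0.
Proof. by case: (hL i). Qed.

Lemma jG (i : 'I_k) : LindS (filt C i) = Lind (row i G).
Proof. by case: (hL i). Qed.

Lemma rowG_in (i : 'I_k) : row i G \in filt C i.
Proof. by case: (hL i). Qed.

Definition jo (i : 'I_k) : 'I_l := Ordinal (Lind_lt (rowG_nz i)).

Lemma Lcoef_G (i : 'I_k) : Lcoef (row i G) = (row i G 0 (jo i) : P).
Proof. by rewrite Lcoef_rs /lc -Lind_rs -[Lind _]/(nat_of_ord (jo i)) nth_rs. Qed.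

Lemma LcoefG_monic (i : 'I_k) : Lcoef (row i G) \is monic.
Proof. by case: (hL i). Qed.

Lemma filt_Acode n : (n <= k)%N -> is_Acode (filt C n).
Proof.
elim: n => [|n IH] hn; first exact: hC.
have [h0 hD hZ] := IH (ltnW hn).
pose no := Ordinal hn; have ej : LindS (filt C n) = Lind (row no G) := jG no.
have tl := Lind_lt (rowG_nz no).
split.
- by rewrite filt_inS h0 ej Lind0.
- move=> u v; rewrite !filt_inS ej => /andP[hu lu] /andP[hv lv].
  rewrite hD //=; apply/(Lind_gtP _ tl) => j hj.
  by rewrite mxE (proj1 (Lind_gtP _ tl) lu) // (proj1 (Lind_gtP _ tl) lv) // addr0.
- move=> a u; rewrite !filt_inS ej => /andP[hu lu].
  rewrite hZ //=; apply/(Lind_gtP _ tl) => j hj.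
  by rewrite mxE (proj1 (Lind_gtP _ tl) lu) // mulr0.
Qed.

Lemma filt_ge (n : 'I_k) c : c \in filt C n -> (Lind (row n G) <= Lind c)%N.
Proof.
move=> hc; case: (eqVneq c 0) => [->|c0]; first by rewrite Lind0 ltnW // Lind_lt // rowG_nz.
by rewrite -jG LindS_le.
Qed.

Lemma sub_in (n : 'I_k) c x : c \in filt C n -> (c - x *: row n G) \in filt C n.
Proof.
move=> hc; have [_ hD hZ] := filt_Acode (ltnW (ltn_ord n)).
by rewrite -scaleNr hD // hZ // rowG_in.
Qed.

Lemma sub_low (n : 'I_k) c x (i : 'I_l) : c \in filt C n -> (i < jo n)%N ->
  (c - x *: row n G) 0 i = 0.
Proof.
move=> hc hi; rewrite !mxE (Lind_zero (u := c)); last first.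
  by apply: leq_trans hi (filt_ge hc).
by have := Lind_zero (u := row n G) hi; rewrite mxE => ->; rewrite mulr0 subr0.
Qed.

Lemma sub_j (n : 'I_k) c x : ((c - x *: row n G) 0 (jo n) : P) =
  ((c 0 (jo n) : P) - (x : P) * Lcoef (row n G)) %% f.
Proof. by rewrite Lcoef_G !mxE sub_val. Qed.

Lemma div_lemma (n : 'I_k) c e : c \in filt C n -> e %% f = (c 0 (jo n) : P) ->
  Lcoef (row n G) %| e.
Proof.
move=> hc he; set d := Lcoef (row n G).
have d0 : d != 0 by apply: monic_neq0; exact: LcoefG_monic.
have sd : (size d < size f)%N by rewrite /d Lcoef_G size_A.
set R := e %% d; set Q := e %/ d.
set c2 := c - in_qpoly f Q *: row n G.
have hc2 : c2 \in filt C n by apply: sub_in.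
have e2 : (c2 0 (jo n) : P) = R.
  rewrite sub_j val_inq -he modp_sub_mul.
  have -> : e - Q * d = R by rewrite {1}(divp_eq e d) addrAC subrr add0r.
  by rewrite modp_small // (ltn_trans _ sd) // ltn_modp.
apply/modp_eq0P; apply/eqP; apply/negPn/negP => R0.
have lR0 : lead_coef R != 0 by rewrite lead_coef_eq0.
set y := in_qpoly f (lead_coef R)^-1%:P.
set c3 := y *: c2.
have [_ _ hZ] := filt_Acode (ltnW (ltn_ord n)).
have hc3 : c3 \in filt C n by apply: hZ.
set r3 := (lead_coef R)^-1 *: R.
have sR : (size R < size d)%N by rewrite ltn_modp.
have sr3 : size r3 = size R by rewrite size_scale // invr_eq0.
have e3 : (c3 0 (jo n) : P) = r3.
  rewrite mxE valM e2 val_inq mulrC modp_mul mulrC mul_polyC modp_small //.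
  by rewrite sr3 (ltn_trans sR sd).
have r30 : r3 != 0 by rewrite scaler_eq0 invr_eq0 negb_or lR0.
have [Lc3 Lcc3] : Lind c3 = jo n /\ Lcoef c3 = (c3 0 (jo n) : P).
  apply: Lind_eq; last by apply/eqP => h; move: r30; rewrite -e3 h => /negP; apply.
  by move=> i hi; rewrite mxE sub_low // mulr0.
have mr3 : r3 \is monic by rewrite monicE lead_coefZ mulVf.
have [_ _ _ _ hmin] := hL n.
have := hmin c3 hc3; rewrite Lc3 jG /= => /(_ erefl).
rewrite Lcc3 e3 => /(_ mr3); rewrite sr3 leqNgt sR //.
Qed.

Lemma filt_k_zero c : c \in filt C k -> c = 0.
Proof.
move=> hc; apply/eqP; apply/negPn/negP => h; have [_ hE] := hB.
by apply: (negP hE); apply/existsP; exists c; rewrite hc h.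
Qed.

Lemma orth n : (n <= k)%N -> forall a,
  (forall i : 'I_k, (n <= i)%N -> dotA a (row i G) = 0) ->
  forall c, c \in filt C n -> dotA a c = 0.
Proof.
move=> hn a; move: {2}(k - n)%N (erefl (k - n)%N) => m; elim: m n hn => [|m IH] n hn hm ha c hc.
  have ekn : n = k by apply/eqP; rewrite eqn_leq hn -subn_eq0 hm.
  by rewrite ekn in hc; rewrite (filt_k_zero hc) dotA0.
have hnk : (n < k)%N by rewrite -subn_gt0 hm.
pose no := Ordinal hnk; have hc' : c \in filt C no by [].
set e := (c 0 (jo no) : P).
have dv := div_lemma hc' (modp_small (size_A _)).
set d := Lcoef (row no G) in dv.
set Q := e %/ d; set x := in_qpoly f Q.
set c2 := c - x *: row no G.
have hc2 : c2 \in filt C n.+1.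
  rewrite filt_inS sub_in //=.
  have tl := Lind_lt (rowG_nz no).
  rewrite (jG no); apply/(Lind_gtP _ tl) => j hj.
  case: (ltngtP j (jo no)) => hj2; first by rewrite sub_low.
    by move: hj; rewrite leqNgt hj2.
  have -> : j = jo no by apply: val_inj.
  apply: val_inj; rewrite /= sub_j /x val_inq -/e.
  have ee : e = e %% f by rewrite modp_small // size_A.
  by rewrite {1}ee modp_sub_mul divpK // subrr mod0p.
have h2 : dotA a c2 = 0.
  apply: (IH n.+1) => //; first by rewrite subnS hm.
  by move=> i hi; apply: ha; apply: ltnW.
have -> : c = c2 + x *: row no G by rewrite /c2 subrK.
by rewrite dotAD dotAZ h2 ha // mulr0 addr0.
Qed.

Lemma E3src (i : 'I_k) a : (forall j : 'I_k, (i < j)%N -> dotA a (row j G) = 0) ->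
  dotA a (in_qpoly f (f %/ Lcoef (row i G)) *: row i G) = 0.
Proof.
move=> ha; apply: (orth (n := i.+1)) => //.
set x := in_qpoly f _.
have [h0 _ hZ] := filt_Acode (ltnW (ltn_ord i)).
have df : Lcoef (row i G) %| f.
  by apply: (div_lemma (c := 0)) => //; rewrite modpp mxE.
rewrite filt_inS hZ ?rowG_in //=.
have tl := Lind_lt (rowG_nz i).
rewrite (jG i); apply/(Lind_gtP _ tl) => j hj.
case: (ltngtP j (jo i)) => hj2.
- by rewrite mxE (Lind_zero (u := row i G) hj2) mulr0.
- by move: hj; rewrite leqNgt hj2.
have -> : j = jo i by apply: val_inj.
apply: val_inj; rewrite /= mxE valM -Lcoef_G /x val_inq mulrC modp_mul mulrC.
by rewrite divpK // modpp.
Qed.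

Lemma dual_char a : (a \in dual C) = [forall i : 'I_k, dotA a (row i G) == 0].
Proof.
apply/idP/idP.
  rewrite inE => /forallP h; apply/forallP => i.
  have hi : row i G \in C by apply: (subsetP (filt_sub i)); apply: rowG_in.
  by have := h (row i G); rewrite hi.
move=> /forallP h; rewrite inE; apply/forallP => c; apply/implyP => hc.
apply/eqP; apply: (orth (n := 0)) => // i _; exact/eqP.
Qed.

Lemma size_Gs : size (mx_to_seq G) = k.
Proof. by rewrite /mx_to_seq size_map size_enum_ord. Qed.

Lemma nth_Gs (i : 'I_k) : nth [::] (mx_to_seq G) i = rs (row i G).
Proof.
rewrite /mx_to_seq (nth_map i) ?size_enum_ord // nth_ord_enum /rs.
by apply: eq_map => j; rewrite mxE.
Qed.

Lemma dual_D0 (u : V) : (u \in dual C) <-> D0 f l (mx_to_seq G) (rs u).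
Proof.
rewrite dual_char; split.
  move/forallP => h; split; rewrite ?size_rs ?red_rs // => i; rewrite size_Gs => hi.
  by rewrite -[i]/(nat_of_ord (Ordinal hi)) nth_Gs -dotA_eq0; apply: h.
move=> [_ _ h]; apply/forallP => i; rewrite dotA_eq0 -nth_Gs; by apply: h; rewrite size_Gs ltn_ord.
Qed.

Lemma Inv_Gs : Inv f l (mx_to_seq G).
Proof.
split; rewrite size_Gs.
- move=> i hi; rewrite -[i]/(nat_of_ord (Ordinal hi)) nth_Gs.
  rewrite size_rs -Lind_rs -Lcoef_rs Lind_lt ?rowG_nz ?LcoefG_monic //; split=> //.
  by apply: (div_lemma (c := 0)) => //; [have [] := filt_Acode (ltnW hi) | rewrite modpp mxE].
- move=> i j ij hj; have hi := ltn_trans ij hj.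
  rewrite -[i]/(nat_of_ord (Ordinal hi)) -[j]/(nat_of_ord (Ordinal hj)) !nth_Gs.
  rewrite -!Lind_rs; have := rowG_in (Ordinal hj).
  move/(subsetP (filt_mono (m := i.+1) ij)); rewrite filt_inS => /andP[_].
  by rewrite (jG (Ordinal hi)).
- move=> i hi a ha sa ra.
  rewrite -[i]/(nat_of_ord (Ordinal hi)) nth_Gs -Lcoef_rs.
  pose va : V := \row_(j < l) in_qpoly f (nth 0 a j).
  have eva : rs va = a.
    apply: (@eq_from_nth _ 0); first by rewrite size_rs sa.
    move=> j; rewrite size_rs => hj.
    rewrite -[j]/(nat_of_ord (Ordinal hj)) nth_rs mxE inq_small //.
    by apply: (allP ra); apply: mem_nth; rewrite sa.
  have := E3src (i := Ordinal hi) (a := va).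
  set x := in_qpoly f _; set g := row _ G => h.
  have {}h : dotA va (x *: g) = 0.
    apply: h => j ij; apply/eqP; rewrite dotA_eq0 eva -nth_Gs.
    by apply: ha => //; rewrite size_Gs.
  move/(congr1 (fun z : A => (z : P))): h; rewrite /= dotAZ valM dotA_val eva /x val_inq.
  rewrite modp_mul mulrC modp_mul mulrC => /modp_eq0P.
  by [].
Qed.

End Part3.



Lemma nth_map_nil (T : Type) (g : seq T -> seq T) (Hs : seq (seq T)) n :
  g [::] = [::] -> nth [::] (map g Hs) n = g (nth [::] Hs n).
Proof.
move=> g0; case: (ltnP n (size Hs)) => h; first by rewrite (nth_map [::]).
by rewrite !nth_default ?size_map.
Qed.

End Helpers.
Import Helpers.
Import GRing.Theory.

Theorem mainTheorem3 (F : finFieldType) (f : {poly F}) (l k : nat)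
    (C : {set 'rV[{poly %/ f}]_l}) (G : 'M[{poly %/ f}]_(k, l)) :
  f \is monic -> (1 < size f)%N ->
  is_Acode C -> nzset C -> basis_of_divisors C G ->
  is_CGM (recip_dual C) (HR G).
Proof.
move=> hmon hsz hC _ hB.
have O := gmd_correct hmon hsz (Inv_Gs hmon hsz hC hB).
set H := gen_mat_dual f l (mx_to_seq G) in O.
set M := Mof H in O.
have [O1 O2 O3 O4] := O.
set Ht := filter (@NZ F) H.
have eM : M = rev (map rev Ht) by [].
have sM : size M = size Ht by rewrite eM size_rev size_map.
have eHt : Htilde G = map (map (in_qpoly f)) Ht.
  rewrite /Htilde filter_map; congr map; apply: eq_in_filter => r hr /=.
  rewrite has_map; case nr: (NZ r).
    have hrM : rev r \in M by rewrite eM mem_rev; apply: map_f; rewrite mem_filter nr.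
    have hi : (index (rev r) M < size M)%N by rewrite index_mem.
    have [_ rr _ _ _] := O1 _ hi; rewrite nth_index // in rr.
    move: rr; rewrite /red all_rev => /allP rr.
    move: nr; rewrite /NZ => <-; apply: eq_in_has => x hx /=.
    by rewrite -[_ != 0]/((in_qpoly f x : {poly F}) != 0) inq_small // rr.
  apply/hasPn => x hx /=; have : x = 0.
    by apply/eqP; move/negbT: nr => /hasPn /(_ x hx); rewrite negbK.
  move=> ->; apply/negPn.
  by rewrite -[_ == 0]/((in_qpoly f 0 : {poly F}) == 0) (val_inq hmon hsz) mod0p.
have sH : size (Htilde G) = size M by rewrite eHt size_map sM.
have rsHR : forall i : 'I_(size (Htilde G)), rs (row i (HR G)) = nth [::] M i.
  move=> i; have hiM : (i < size M)%N by rewrite -sH.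
  have [sMi rMi _ _ _] := O1 _ hiM.
  apply: (@eq_from_nth _ 0); first by rewrite size_rs sMi.
  move=> j; rewrite size_rs => hj.
  rewrite -[j]/(nat_of_ord (Ordinal hj)) nth_rs !mxE.
  move: (Ordinal hj) => jo /=.
  move: (nat_of_ord i) hiM sMi rMi => ii hii sMi rMi.
  rewrite eHt size_map -sM.
  set h := nth [::] Ht (size M - ii.+1).
  have eMi : nth [::] M ii = rev h.
    rewrite /h sM eM nth_rev ?size_map -?sM // (nth_map [::]) //.
    by rewrite sM ltn_subrL /= -sM (leq_ltn_trans (leq0n _) hii).
  rewrite eMi in sMi rMi *; rewrite size_rev in sMi.
  rewrite /red all_rev in rMi.
  have hl : (l - jo.+1 < size h)%N by rewrite sMi ltn_subrL /= (leq_ltn_trans (leq0n _) (ltn_ord jo)).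
  rewrite (nth_map [::]); last by rewrite sM ltn_subrL /= -sM (leq_ltn_trans (leq0n _) hii).
  rewrite -/h (nth_map 0) // inq_small //; last by apply: (allP rMi); apply: mem_nth.
  by rewrite nth_rev sMi.
have hiM : forall i : 'I_(size (Htilde G)), (i < size M)%N by move=> i; rewrite -sH.
apply: suff_CGM.
- move=> i; have [_ _ dM _ _] := O1 _ (hiM i).
  apply/imsetP; exists (rev_rV (row i (HR G))); last by rewrite rev_rVK.
  by apply/(dual_D0 hmon hsz hC hB); rewrite rs_rev rsHR.
- by move=> i; have [_ _ _ nM _] := O1 _ (hiM i); rewrite -NZ_rs rsHR.
- by move=> i; have [_ _ _ _ mM] := O1 _ (hiM i); rewrite Lcoef_rs rsHR.
- by move=> t i ti; rewrite !Lind_rs !rsHR; apply: O2.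
- move=> c /imsetP[u hu ->] c0.
  have hD : D0 f l (mx_to_seq G) (rev (rs (rev_rV u))).
    by rewrite rs_rev revK; apply/(dual_D0 hmon hsz hC hB).
  have hnz : NZ (rs (rev_rV u)) by rewrite NZ_rs.
  have [i0 hi0 [e1 e2]] := O3 _ (size_rs _) (red_rs hmon hsz _) hD hnz.
  have hi0' : (i0 < size (Htilde G))%N by rewrite sH.
  exists (Ordinal hi0'); rewrite Lind_rs Lcoef_rs Lind_rs Lcoef_rs !rsHR /=.
  by rewrite e1.
- by move=> t i ti; rewrite ent_rs Lcoef_rs !Lind_rs !rsHR; apply: O4.
Qed.
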